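(* For every integer $n\ge 0$, $|\mathfrak D^2_{2n}(3142)|=C_n=\frac{1}{n+1}\binom{2n}{n}$, the $n$th Catalan number.
   Context: A Dumont permutation of the second kind of length $2n$ is a permutation $\pi\in\mathfrak S_{2n}$ such that for every $i=1,\dots,n$ one has $\pi(2i)<2i$ and $\pi(2i-1)\ge 2i-1$. $\mathfrak D^2_{2n}$ denotes the set of these ($\mathfrak D^2_0$ consists of the empty permutation). A permutation $\sigma$ contains a pattern $\tau\in\mathfrak S_k$ if some subsequence $(\sigma(i_1),\dots,\sigma(i_k))$, $i_1<\dots<i_k$, is order-isomorphic to $\tau$; otherwise $\sigma$ avoids $\tau$. $\mathfrak D^2_{2n}(T)$ denotes the set of permutations in $\mathfrak D^2_{2n}$ avoiding every pattern in $T$. *)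

(* Defs.v *)
From mathcomp Require Import all_boot all_order all_fingroup.
Set Implicit Arguments. Unset Strict Implicit. Unset Printing Implicit Defensive.

(* Permutations of {1,...,m} are modelled as s : 'S_m, permutations of
   'I_m = {0,...,m-1}; position p (0-based) corresponds to position p+1
   and value v (0-based) to value v+1. *)

Definition contains_pattern (m : nat) (s : 'S_m) (tau : seq nat) : bool :=
  [exists f : {ffun 'I_(size tau) -> 'I_m},
     [forall a : 'I_(size tau), forall b : 'I_(size tau),
        ((a < b) ==> (f a < f b)) &&
        ((val (s (f a)) < val (s (f b))) == (nth 0 tau a < nth 0 tau b))]].

Definition avoids_pattern (m : nat) (s : 'S_m) (tau : seq nat) : bool :=
  ~~ contains_pattern s tau.

(* Dumont permutation of the second kind of length 2n:
   pi(2i) < 2i and pi(2i-1) >= 2i-1 (1-based).  In 0-based terms, at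
   position p: if p is odd, s p < p; if p is even, s p >= p. *)
Definition dumont2 (n : nat) (s : 'S_(n.*2)) : bool :=
  [forall p : 'I_(n.*2), if odd p then val (s p) < p else p <= val (s p)].

(* Main.v *)
Require Import Defs.
From mathcomp Require Import all_boot all_order all_fingroup.
From mathcomp Require Import zify.
Set Implicit Arguments. Unset Strict Implicit. Unset Printing Implicit Defensive.
Fixpoint B (n k : nat) : nat := if n is n'.+1 then \sum_(i < k) B n' i.+2 else 1.

Lemma B0k k : B 0 k = 1. Proof. by []. Qed.
Lemma BS0 n : B n.+1 0 = 0. Proof. by rewrite /= big_ord0. Qed.
Lemma BSS n k : B n.+1 k.+1 = B n.+1 k + B n k.+2.
Proof. by rewrite /= big_ord_recr. Qed.

Lemma Bconv n a b : \sum_(j < n.+1) B j a * B (n - j) b = B n (a + b).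
Proof.
elim: n a b => [|n IHn] a b; first by rewrite big_ord1.
elim: a => [|a IHa].
  rewrite big_ord_recl big1 ?addn0 => [|i _]; first by rewrite mul1n.
  by rewrite lift0 BS0.
rewrite big_ord_recl.
under eq_bigr => i _ do rewrite lift0 BSS mulnDl subSS.
rewrite big_split IHn.
rewrite big_ord_recl in IHa.
rewrite (eq_bigr (fun i : 'I_n.+1 => B i.+1 a * B (n - i) b)) in IHa; last first.
  by move=> i _; rewrite lift0 subSS.
rewrite !B0k in IHa *. rewrite addnA IHa addSn BSS. by rewrite addSn.
Qed.

Lemma B1j j : B 1 j = j.
Proof. by rewrite /= sum1_card card_ord. Qed.

Lemma Bclosed n k : B n.+1 k.+1 + 'C(n + n + 2 + k, n) = 'C(n + n + 2 + k, n.+1).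
Proof.
elim: n k => [|m IHm] k.
  by rewrite B1j bin0 add0n bin1; lia.
elim: k => [|k IHk].
  rewrite BSS BS0 add0n.
  have := IHm 1.
  have -> : m.+1 + m.+1 + 2 + 0 = (m + m + 2 + 1).+1 by lia.
  have Hl : m.+1 <= m + m + 2 + 1 by lia.
  have Hs := bin_sub Hl.
  have E : m + m + 2 + 1 - m.+1 = m.+2 by lia.
  rewrite E in Hs.
  move: Hs; move: (m + m + 2 + 1) => N Hs.
  rewrite !binS Hs.
  lia.
rewrite BSS.
have := IHm k.+2.
have -> : m + m + 2 + k.+2 = m.+1 + m.+1 + 2 + k by lia.
have -> : m.+1 + m.+1 + 2 + k.+1 = (m.+1 + m.+1 + 2 + k).+1 by lia.
move: IHk; move: (m.+1 + m.+1 + 2 + k) => N IHk.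
rewrite !binS.
lia.
Qed.

Lemma catalanB n : B n 1 = 'C(n.*2, n) %/ n.+1.
Proof.
case: n => [|m]; first by rewrite bin0 divn1.
have H := Bclosed m 0.
have H2 := mul_bin_left (m + m + 2 + 0) m.
have -> : m.+1.*2 = m + m + 2 + 0 by lia.
have E : 'C(m + m + 2 + 0, m.+1) = B m.+1 1 * m.+2 by nia.
by rewrite E mulnK.
Qed.
Definition occ (s : seq nat) i j k l :=
  [&& i < j, j < k, k < l, l < size s, nth 0 s j < nth 0 s l,
      nth 0 s l < nth 0 s i & nth 0 s i < nth 0 s k].
Definition P3142 s := exists i j k l, occ s i j k l.
Definition has3142 (s : seq nat) : bool :=
  [exists i : 'I_(size s), exists j : 'I_(size s), exists k : 'I_(size s),
     exists l : 'I_(size s), occ s i j k l].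

Lemma has3142P s : reflect (P3142 s) (has3142 s).
Proof.
apply: (iffP idP).
  by case/existsP=> i /existsP[j] /existsP[k] /existsP[l] H; exists i, j, k, l.
case=> i [j [k [l H]]].
have /and4P[Hi Hj Hk Hl] : [&& i < size s, j < size s, k < size s & l < size s].
  by move: H; rewrite /occ; lia.
apply/existsP; exists (Ordinal Hi); apply/existsP; exists (Ordinal Hj).
apply/existsP; exists (Ordinal Hk); apply/existsP; exists (Ordinal Hl).
exact: H.
Qed.

Lemma occ_lift s t o c :
  (forall q, q < size t -> nth 0 s (o + q) = nth 0 t q + c) ->
  o + size t <= size s -> P3142 t -> P3142 s.
Proof.
move=> Hn Hs [i [j [k [l H]]]].
exists (o + i), (o + j), (o + k), (o + l).
have /and4P[Hi Hj Hk Hl] : [&& i < size t, j < size t, k < size t & l < size t].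
  by move: H; rewrite /occ; lia.
move: H; rewrite /occ !Hn //; lia.
Qed.

Lemma occ_restrict s t o c i j k l :
  (forall q, q < size t -> nth 0 s (o + q) = nth 0 t q + c) ->
  occ s i j k l -> o <= i -> l < o + size t -> P3142 t.
Proof.
move=> Hn H Hoi Hl.
exists (i - o), (j - o), (k - o), (l - o).
have /and4P[Hi Hj Hk Hl'] : [&& i - o < size t, j - o < size t, k - o < size t & l - o < size t].
  by move: H; rewrite /occ; lia.
have E x : o <= x -> x - o < size t -> nth 0 s x = nth 0 t (x - o) + c.
  by move=> Ho Hx; rewrite -Hn // subnKC.
have /and3P[Hoj Hok Hol] : [&& o <= j, o <= k & o <= l] by move: H; rewrite /occ; lia.
move: H; rewrite /occ !E //; lia.
Qed.

Definition isperm (s : seq nat) := uniq s && all (fun x => x < size s) s.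
Definition dum (s : seq nat) :=
  all (fun p => if odd p then nth 0 s p < p else p <= nth 0 s p) (iota 0 (size s)).
Definition xdum (s : seq nat) :=
  all (fun p => if odd p then nth 0 s p <= p else p < nth 0 s p) (iota 0 (size s)).

Lemma dumP s : reflect (forall p, p < size s -> if odd p then nth 0 s p < p else p <= nth 0 s p) (dum s).
Proof.
apply: (iffP allP) => H p Hp; first by apply: H; rewrite mem_iota.
by apply: H; move: Hp; rewrite mem_iota.
Qed.

Lemma xdumP s : reflect (forall p, p < size s -> if odd p then nth 0 s p <= p else p < nth 0 s p) (xdum s).
Proof.
apply: (iffP allP) => H p Hp; first by apply: H; rewrite mem_iota.
by apply: H; move: Hp; rewrite mem_iota.
Qed.

Lemma isperm_nth s p : isperm s -> p < size s -> nth 0 s p < size s.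
Proof. by case/andP=> _ /allP H Hp; apply/H/mem_nth. Qed.

Definition rc (s : seq nat) := rev (map (fun x => (size s).-1 - x) s).

Lemma size_rc s : size (rc s) = size s.
Proof. by rewrite /rc size_rev size_map. Qed.

Lemma nth_rc s p : p < size s -> nth 0 (rc s) p = (size s).-1 - nth 0 s ((size s).-1 - p).
Proof.
move=> Hp; rewrite /rc nth_rev size_map // (nth_map 0); last by lia.
by have -> : size s - p.+1 = (size s).-1 - p by lia.
Qed.

Lemma isperm_rc s : isperm s -> isperm (rc s).
Proof.
case/andP=> Hu /allP Ha; apply/andP; split.
  rewrite /rc rev_uniq map_inj_in_uniq // => x y Hx Hy.
  have := Ha x Hx; have := Ha y Hy; lia.
apply/allP=> x; rewrite size_rc /rc mem_rev => /mapP[y Hy ->].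
have := Ha y Hy; lia.
Qed.

Lemma rcK s : all (fun x => x < size s) s -> rc (rc s) = s.
Proof.
move=> /allP Ha; rewrite {1}/rc size_rc /rc map_rev revK -map_comp.
rewrite -[RHS]map_id; apply/eq_in_map => x Hx /=.
have := Ha x Hx; lia.
Qed.

Lemma rc_occ s : all (fun x => x < size s) s -> P3142 (rc s) -> P3142 s.
Proof.
move=> /allP Ha [i [j [k [l H]]]].
have Hb x : x < size s -> nth 0 s x < size s by move=> Hx; apply/Ha/mem_nth.
set m := size s in Hb.
have /and4P[Hi Hj Hk Hl] : [&& i < m, j < m, k < m & l < m].
  by move: H; rewrite /occ size_rc; lia.
exists (m.-1 - l), (m.-1 - k), (m.-1 - j), (m.-1 - i).
move: H; rewrite /occ !nth_rc // size_rc -/m.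
have := Hb (m.-1 - i); have := Hb (m.-1 - j); have := Hb (m.-1 - k); have := Hb (m.-1 - l).
lia.
Qed.

Lemma odd_rev m p : ~~ odd m -> p < m -> odd (m.-1 - p) = ~~ odd p.
Proof.
move=> Hm Hp; rewrite oddB; last by lia.
case: m Hm Hp => [|m] //= Hm _; rewrite negbK in Hm; by rewrite Hm; case: (odd p).
Qed.

Lemma dum_rc s : ~~ odd (size s) -> isperm s -> dum s -> xdum (rc s).
Proof.
move=> Hm Hs /dumP H; apply/xdumP => p; rewrite size_rc => Hp.
rewrite nth_rc //.
have Hq : (size s).-1 - p < size s by lia.
have := H _ Hq; have := isperm_nth Hs Hq.
rewrite odd_rev //; case: (odd p) => /=; lia.
Qed.

Lemma xdum_rc s : ~~ odd (size s) -> isperm s -> xdum s -> dum (rc s).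
Proof.
move=> Hm Hs /xdumP H; apply/dumP => p; rewrite size_rc => Hp.
rewrite nth_rc //.
have Hq : (size s).-1 - p < size s by lia.
have := H _ Hq; have := isperm_nth Hs Hq.
rewrite odd_rev //; case: (odd p) => /=; lia.
Qed.

Definition good s := [&& isperm s, dum s & ~~ has3142 s].
Definition dcomp (a b : seq nat) :=
  (size a).+1 :: 0 :: map succn (rc a) ++ map (addn (size a).+2) b.

Lemma size_comp a b : size (dcomp a b) = (size a).+2 + size b.
Proof. by rewrite /= size_cat !size_map size_rc; lia. Qed.

Lemma nth_comp_a a b q : q < size a -> nth 0 (dcomp a b) q.+2 = (nth 0 (rc a) q).+1.
Proof. by move=> Hq; rewrite /= nth_cat size_map size_rc Hq (nth_map 0) ?size_rc. Qed.

Lemma nth_comp_b a b q : q < size b ->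
  nth 0 (dcomp a b) ((size a).+2 + q) = nth 0 b q + (size a).+2.
Proof.
move=> Hq; rewrite addSn addSn /= nth_cat size_map size_rc.
rewrite ltnNge leq_addr /= addKn (nth_map 0) //; lia.
Qed.

Lemma comp_good a b : ~~ odd (size a) -> good a -> good b -> good (dcomp a b).
Proof.
move=> Hev /and3P[Pa Da Aa] /and3P[Pb Db Ab].
have Pra := isperm_rc Pa.
have Xa := dum_rc Hev Pa Da.
have memX y : y \in map succn (rc a) -> 0 < y <= size a.
  case/mapP=> z Hz ->; case/andP: Pra => _ /allP H; have := H z Hz; rewrite size_rc; lia.
have memY y : y \in map (addn (size a).+2) b -> (size a).+2 <= y < (size a).+2 + size b.
  case/mapP=> z Hz ->; case/andP: Pb => _ /allP H; have := H z Hz; lia.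
apply/and3P; split.
- apply/andP; split.
    rewrite /dcomp cons_uniq in_cons mem_cat cons_uniq mem_cat cat_uniq.
    rewrite !map_inj_uniq; [|exact: addnI|exact: succn_inj].
    case/andP: Pra => -> _; case/andP: Pb => -> _ /=.
    apply/and3P; split.
    + apply/negP => /orP[/memX|/memY]; lia.
    + apply/negP => /orP[/memX|/memY]; lia.
    + rewrite andbT; apply/hasP => -[y /memY H1 /memX H2]; lia.
  apply/allP => y; rewrite size_comp in_cons => /orP[/eqP->|]; first by lia.
  rewrite in_cons mem_cat => /orP[/eqP->|/orP[/memX|/memY]]; lia.
- apply/dumP => p; rewrite size_comp.
  case: p => [|[|p]] //= Hp.
  case: (ltnP p (size a)) => Hpa.
    move: (nth_comp_a b Hpa) => /= ->.
    move/xdumP: Xa => /(_ p); rewrite size_rc => /(_ Hpa).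
    case: (odd p) => /=; lia.
  have Hq : p - size a < size b by lia.
  have := nth_comp_b a Hq; rewrite addSn addSn subnKC // => /= ->.
  move/dumP: Db => /(_ _ Hq).
  rewrite oddB // (negbTE Hev) /=; case: (odd p) => /=; lia.
- have B1 p : p < (size a).+2 -> nth 0 (dcomp a b) p < (size a).+2.
    case: p => [|[|p]] // Hp.
    rewrite nth_comp_a; last by lia.
    have := isperm_nth Pra (_ : p < size (rc a)); rewrite size_rc => H; have := H Hp; lia.
  have B2 p : (size a).+2 <= p -> p < size (dcomp a b) -> nth 0 (dcomp a b) p < (size a).+2 -> False.
    move=> Hp Hs; rewrite -(subnKC Hp).
    have Hq : p - (size a).+2 < size b by move: Hs; rewrite size_comp; lia.
    rewrite nth_comp_b //; lia.
  apply/has3142P => -[i [j [k [l H]]]].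
  case: (ltnP l (size a).+2) => Hl.
    case: i H => [|[|i]] H.
    + have := B1 k; move: H; rewrite /occ /=; lia.
    + move: H; rewrite /occ /=; lia.
    + have : P3142 (rc a).
        apply: (occ_restrict (o := 2) (c := 1) _ H) => //; last by rewrite size_rc.
        by move=> q; rewrite size_rc => Hq; rewrite nth_comp_a // addn1.
      move/(rc_occ (proj2 (andP Pa))) => /has3142P; by rewrite (negbTE Aa).
  have Hi : (size a).+2 <= i.
    rewrite leqNgt; apply/negP => Hi; have := B1 _ Hi.
    have Hls : l < size (dcomp a b) by move: H; rewrite /occ; lia.
    case: (ltnP (nth 0 (dcomp a b) l) (size a).+2) => Hv; first by move/(B2 _ Hl Hls): Hv.
    move: H; rewrite /occ; lia.
  have : P3142 b.
    apply: (occ_restrict (o := (size a).+2) (c := (size a).+2) _ H) => //.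
      by move=> q Hq; rewrite nth_comp_b.
    move: H; rewrite /occ size_comp; lia.
  by move/has3142P; rewrite (negbTE Ab).
Qed.

Lemma isperm_memE s : isperm s -> s =i iota 0 (size s).
Proof.
case/andP=> Hu /allP Ha.
have [] := uniq_min_size Hu (_ : {subset s <= iota 0 (size s)}) (_ : size (iota 0 (size s)) <= size s) => //.
  by move=> x Hx; rewrite mem_iota add0n Ha.
by rewrite size_iota.
Qed.

Lemma nth_uniq0 s i j : uniq s -> i < size s -> j < size s -> nth 0 s i = nth 0 s j -> i = j.
Proof. by move=> Hu Hi Hj /eqP; rewrite nth_uniq // => /eqP. Qed.

Lemma decomp p : good p -> ~~ odd (size p) -> 0 < size p ->
  exists a b, [/\ p = dcomp a b, ~~ odd (size a), good a & good b].
Proof.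
case: p => [|x0 [|x1 r]] //.
move=> Hg Hev _; have /and3P[Pp Dp Ap] := Hg.
have Hx1 : x1 = 0 by move/dumP: Dp => /(_ 1 isT) /=; lia.
subst x1.
have Up : uniq [:: x0, 0 & r] by case/andP: Pp.
have Hsz q : q < size [:: x0, 0 & r] -> nth 0 [:: x0, 0 & r] q < (size r).+2.
  by move=> Hq; have := isperm_nth Pp Hq.
have Hneq q i : q < size [:: x0, 0 & r] -> i < size [:: x0, 0 & r] -> q != i ->
  nth 0 [:: x0, 0 & r] q != nth 0 [:: x0, 0 & r] i.
  by move=> Hq Hi Hqi; apply/negP => /eqP /(nth_uniq0 Up Hq Hi) /eqP; rewrite (negbTE Hqi).
case: x0 Hg Hev Pp Dp Ap Up Hsz Hneq => [|h] Hg Hev Pp Dp Ap Up Hsz Hneq.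
  by have := Hneq 0 1 isT isT isT.
have Hhr : h <= size r by have := Hsz 0 isT; rewrite /=; lia.
set t := [:: h.+1, 0 & take h r].
have EP : [:: h.+1, 0 & r] = t ++ drop h r by rewrite /t /= cat_take_drop.
have Ut : uniq t by move: Up; rewrite EP cat_uniq => /andP[].
have St : size t = h.+2 by rewrite /t /= size_takel.
have Avoid i j k l : occ [:: h.+1, 0 & r] i j k l -> False.
  by move=> H; move/negP: Ap; apply; apply/has3142P; exists i, j, k, l.
have C1 q : q < h -> nth 0 r q < h.+2.
  move=> Hq; rewrite ltnNge; apply/negP => Hbig.
  case: (boolP (all (fun v => v \in t) (iota 0 h.+2))) => Hall.
    have Hsub : {subset iota 0 h.+2 <= t} by move=> x Hx; move/allP: Hall => /(_ x Hx).
    have Hsz' : size t <= size (iota 0 h.+2) by rewrite St size_iota.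
    have [_ E] := uniq_min_size (iota_uniq 0 h.+2) Hsub Hsz'.
    have : nth 0 r q \in t by rewrite /t !in_cons -(nth_take 0 Hq) mem_nth ?orbT // size_takel.
    by rewrite -E mem_iota; lia.
  case/allPn: Hall => v; rewrite mem_iota add0n => Hv Hvt.
  have : v \in [:: h.+1, 0 & r] by rewrite (isperm_memE Pp) mem_iota /=; lia.
  rewrite EP mem_cat (negbTE Hvt) /= => Hvd.
  have Hv0 : v != 0 by apply: contra Hvt => /eqP ->; rewrite /t !in_cons eqxx orbT.
  have Hvh : v != h.+1 by apply: contra Hvt => /eqP ->; rewrite /t !in_cons eqxx.
  set j := index v (drop h r).
  have Hj : j < size (drop h r) by rewrite index_mem.
  have Hnj : nth 0 r (h + j) = v by rewrite -nth_drop nth_index.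
  apply: (Avoid 0 1 q.+2 (h + j).+2).
  rewrite /occ /= Hnj; move: Hj; rewrite size_drop; lia.
have Hb1 q : q < h -> 0 < nth 0 r q <= h.
  move=> Hq; have := C1 q Hq.
  have := Hneq q.+2 1; have := Hneq q.+2 0; rewrite /=; lia.
have Et : t =i iota 0 h.+2.
  have Hsub : {subset t <= iota 0 h.+2}.
    move=> x; rewrite mem_iota /t !in_cons => /orP[/eqP->|/orP[/eqP->|Hx]]; try lia.
    move/(nthP 0): Hx => [q]; rewrite size_takel // => Hq <-.
    by rewrite nth_take //; have := Hb1 q Hq => /andP[_ H]; rewrite leq0n add0n ltnS (leq_trans H (leqnSn h)).
  have Hsz' : size (iota 0 h.+2) <= size t by rewrite St size_iota.
  by have [_ E] := uniq_min_size Ut Hsub Hsz'.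
have memw (x : nat) : x \in drop h r -> h.+2 <= x < (size r).+2.
  move=> Hx; have := Hx; move/(nthP 0) => [j Hj Hjx].
  have : x < (size r).+2.
    by rewrite -Hjx nth_drop; have := Hsz (h + j).+2; rewrite /=; move: Hj; rewrite size_drop ltn_subRL => H1 H2; apply: H2.
  move=> ->; rewrite andbT leqNgt; apply/negP => Hlt.
  have : x \in t by rewrite Et mem_iota; lia.
  move: Up; rewrite EP cat_uniq => /and3P[_ /hasPn H _] Ht.
  by move: (H x Hx); rewrite Ht.
have Heven : ~~ odd h.
  apply/negP => Hodd.
  have [k Ek] : exists k, h = k.+1 by move: Hodd; case: (h) => [|k] //; exists k.
  have Hk : odd k.+2 = false by move: Hodd; rewrite Ek /= negbK => /negPf.
  have := C1 k; have := Hneq k.+2 0; move/dumP: Dp => /(_ k.+2).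
  rewrite /= negbK; move: Hodd Hhr; rewrite Ek /= => /negPf -> Hhr. lia.
have Ur : uniq r by case/andP: Up => _ /andP[].
have memu (x : nat) : x \in take h r -> 0 < x <= h.
  by move/(nthP 0) => [q]; rewrite size_takel // => Hq <-; rewrite nth_take //; apply: Hb1.
set al := map predn (take h r).
have Sal : size al = h by rewrite size_map size_takel.
have Nal q : q < h -> nth 0 al q = (nth 0 r q).-1.
  by move=> Hq; rewrite (nth_map 0) ?nth_take // size_takel.
have Pal : isperm al.
  apply/andP; split.
    rewrite map_inj_in_uniq; first exact: take_uniq.
    by move=> x y /memu Hx /memu Hy; lia.
  by apply/allP => x /mapP[y /memu Hy ->]; rewrite Sal; lia.
have Xal : xdum al.
  apply/xdumP => q; rewrite Sal => Hq; rewrite Nal //.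
  move/dumP: Dp => /(_ q.+2); rewrite /= negbK; have := Hb1 q Hq.
  move: Hhr; case: (odd q) => H1 H2 H3; clear -H1 H2 H3 Hq; lia.
have Eal : rc (rc al) = al := rcK (proj2 (andP Pal)).
set b := map (subn^~ h.+2) (drop h r).
have Sb : size b = size r - h by rewrite size_map size_drop.
have Nb q : q < size b -> nth 0 b q = nth 0 r (h + q) - h.+2.
  by rewrite Sb => Hq; rewrite (nth_map 0) ?nth_drop // size_drop.
have Nb' q : q < size b -> h.+2 <= nth 0 r (h + q) < (size r).+2.
  by rewrite Sb => Hq; apply: memw; rewrite -nth_drop mem_nth // size_drop.
exists (rc al), b; split.
- rewrite /dcomp size_rc Sal Eal.
  congr (_ :: _ :: _); rewrite -{1}(cat_take_drop h r); congr (_ ++ _).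
    by rewrite -map_comp map_id_in // => x /memu Hx /=; rewrite prednK //; case/andP: Hx.
  by rewrite -map_comp map_id_in // => x /memw Hx /=; rewrite subnKC //; case/andP: Hx.
- by rewrite size_rc Sal.
- apply/and3P; split; first exact: isperm_rc.
    by apply: xdum_rc => //; rewrite Sal.
  apply/negP => /has3142P /(rc_occ (proj2 (andP Pal))) H.
  move/negP: Ap; apply; apply/has3142P.
  apply: (occ_lift (o := 2) (c := 1) _ _ H); last by rewrite Sal /=; lia.
  move=> q; rewrite Sal => Hq; rewrite Nal // addn1 prednK //.
  by case/andP: (Hb1 q Hq).
- apply/and3P; split.
  + apply/andP; split.
      rewrite map_inj_in_uniq; first exact: drop_uniq.
      by move=> x y /memw Hx /memw Hy E; clear -Hx Hy E; lia.
    apply/allP => x /mapP[y /memw Hy ->]; rewrite Sb; clear -Hy; lia.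
  + apply/dumP => q Hq; rewrite Nb //.
    move/dumP: Dp => /(_ (h + q).+2); rewrite /= negbK oddD (negbTE Heven) /=.
    have := Nb' q Hq; move: Hq; rewrite Sb; case: (odd q) => /= H1 H2 H3; clear -H1 H2 H3; lia.
  + apply/negP => /has3142P H.
    move/negP: Ap; apply; apply/has3142P.
    apply: (occ_lift (o := h.+2) (c := h.+2) _ _ H); last by rewrite Sb /=; lia.
    move=> q Hq; rewrite Nb // subnK //.
    by case/andP: (Nb' q Hq).
Qed.
Lemma isperm_perm s m : size s = m -> perm_eq s (iota 0 m) = isperm s.
Proof.
move=> <-; apply/idP/idP => H.
  apply/andP; split; first by rewrite (perm_uniq H) iota_uniq.
  by apply/allP => x; rewrite (perm_mem H) mem_iota.
apply: uniq_perm; [by case/andP: H | exact: iota_uniq | exact: isperm_memE].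
Qed.

Definition goods n := [seq s <- permutations (iota 0 n.*2) | good s].

Lemma mem_goods n s : (s \in goods n) = (size s == n.*2) && good s.
Proof.
rewrite mem_filter mem_permutations andbC.
case: (eqVneq (size s) n.*2) => Hs.
  rewrite isperm_perm // /good.
  by case: (isperm s); rewrite ?andbT ?andbF.
case Hp: (perm_eq s (iota 0 n.*2)) => //.
by move/perm_size: Hp; rewrite size_iota => E; rewrite E eqxx in Hs.
Qed.

Lemma good_nil : good [::].
Proof.
apply/and3P; split=> //; apply/negP => /has3142P [i [j [k [l]]]]; rewrite /occ /=; lia.
Qed.

Lemma comp_inj (a b a' b' : seq nat) : isperm a -> isperm a' -> dcomp a b = dcomp a' b' -> [/\ a = a' & b = b'].
Proof.
move=> Pa Pa' E; case: E => Es E'; move/eqP: E'; rewrite Es eqseq_cat ?size_map ?size_rc ?Es //.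
case/andP=> /eqP/(inj_map succn_inj) E1 /eqP/(inj_map (@addnI _)) E2; split => //.
by rewrite -(rcK (proj2 (andP Pa))) E1 rcK //; case/andP: Pa'.
Qed.

Lemma count_rec n : size (goods n.+1) = \sum_(k < n.+1) size (goods k) * size (goods (n - k)).
Proof.
set R := [seq dcomp x.1 x.2 | k <- iota 0 n.+1, x <- [seq (a, b) | a <- goods k, b <- goods (n - k)]].
have UR : uniq R.
  apply: allpairs_uniq_dep.
  - exact: iota_uniq.
  - move=> k _; apply: allpairs_uniq; rewrite ?filter_uniq ?permutations_uniq //.
    by move=> [x1 y1] [x2 y2] _ _.
  - move=> p1 p2 /allpairsPdep[k1' [[a1' b1'] [_ H1 ->]]].
    move=> /allpairsPdep[k2' [[a2' b2'] [_ H2 ->]]] /=.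
    move: H1 H2 => /allpairsP[[x1 y1] /= [Hx1 Hy1 [-> ->]]] /allpairsP[[x2 y2] /= [Hx2 Hy2 [-> ->]]].
    move: Hx1 Hx2; rewrite !mem_goods => /andP[/eqP Sx1 /and3P[Px1 _ _]] /andP[/eqP Sx2 /and3P[Px2 _ _]].
    case/(comp_inj Px1 Px2) => E1 E2; subst x2 y2.
    have Ek : k1' = k2' by move: Sx1 Sx2 => -> /eqP; rewrite -!muln2 eqn_mul2r /= => /eqP.
    by subst k2'.
have Hperm : perm_eq (goods n.+1) R.
  apply: uniq_perm; [by rewrite filter_uniq ?permutations_uniq | exact: UR |].
  move=> s; apply/idP/idP.
    rewrite mem_goods => /andP[/eqP Ss Gs].
    have [a [b [E Ea Ga Gb]]] : exists a b, [/\ s = dcomp a b, ~~ odd (size a), good a & good b].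
      by apply: decomp => //; rewrite Ss ?odd_double //; lia.
    move: Ss; rewrite E size_comp => Ss.
    have [k Hk] : exists k, size a = k.*2 by exists (size a)./2; rewrite -[LHS](odd_double_half (size a)) (negbTE Ea).
    apply/allpairsPdep; exists k, (a, b); split => //.
      rewrite mem_iota; lia.
    apply/allpairsP; exists (a, b); split => //; rewrite mem_goods ?Ga ?Gb ?andbT /=; apply/eqP; lia.
  case/allpairsPdep => k [[a b] [Hk Hab ->]].
  move: Hab => /allpairsP[[x y] /= [Hx Hy [-> ->]]].
  move: Hx Hy; rewrite !mem_goods => /andP[/eqP Sx Gx] /andP[/eqP Sy Gy].
  rewrite size_comp Sx Sy comp_good ?Sx ?odd_double // andbT; move: Hk; rewrite mem_iota; lia.
rewrite (perm_size Hperm) size_allpairs_dep.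
rewrite sumnE big_map.
under eq_bigr => k _ do rewrite size_allpairs.
by rewrite -[iota 0 n.+1]/(index_iota 0 n.+1) big_mkord.
Qed.

Lemma count_goods n : size (goods n) = B n 1.
Proof.
elim/ltn_ind: n => -[|n] IH.
  by rewrite /goods /= good_nil.
rewrite count_rec BSS BS0 add0n -[2]/(1 + 1) -Bconv.
apply: eq_bigr => k _; rewrite !IH //; lia.
Qed.

Section Bridge.
Variable n : nat.
Local Notation m := n.*2.
Definition F (s : 'S_m) : seq nat := [seq val (s i) | i <- enum 'I_m].

Lemma size_F s : size (F s) = m.
Proof. by rewrite size_map size_enum_ord. Qed.

Lemma nth_F s (i : 'I_m) : nth 0 (F s) i = val (s i).
Proof. by rewrite (nth_map i) ?nth_ord_enum // size_enum_ord. Qed.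

Lemma isperm_F s : isperm (F s).
Proof.
apply/andP; split.
  rewrite map_inj_uniq ?enum_uniq // => i j /val_inj; exact: perm_inj.
apply/allP => x; rewrite size_F => /mapP[i _ ->]; exact: ltn_ord.
Qed.

Lemma F_inj : injective F.
Proof.
move=> s t E; apply/permP => i; apply/val_inj.
by rewrite -!nth_F E.
Qed.

Lemma F_surj s : size s = m -> isperm s -> exists t, F t = s.
Proof.
move=> Ss /andP[Us /allP As].
have Hlt (i : 'I_m) : nth 0 s i < m.
  have Hi : i < size s by rewrite Ss.
  by have := As _ (mem_nth 0 Hi); rewrite Ss.
pose f := [ffun i : 'I_m => Ordinal (Hlt i)].
have fi : injective f.
  move=> i j; rewrite !ffunE => /(congr1 val) /= /eqP; rewrite nth_uniq ?Ss //.
  by move/eqP/val_inj.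
exists (perm fi); apply: (@eq_from_nth _ 0); first by rewrite size_F.
move=> i; rewrite size_F => Hi.
by rewrite -[i]/(val (Ordinal Hi)) nth_F permE ffunE.
Qed.

Lemma dum_F s : dumont2 s = dum (F s).
Proof.
apply/forallP/dumP => H p.
  rewrite size_F => Hp; have := H (Ordinal Hp); by rewrite -[p]/(val (Ordinal Hp)) nth_F.
by have := H p; rewrite size_F ltn_ord nth_F => ->.
Qed.

End Bridge.

Lemma avoid_F n (s : 'S_(n.*2)) : avoids_pattern s [:: 3; 1; 4; 2] = ~~ has3142 (F s).
Proof.
congr negb; apply/idP/has3142P.
  case/existsP => g /forallP H.
  have K a b := forallP (H a) b.
  pose o0 : 'I_4 := Ordinal (isT : 0 < 4). pose o1 : 'I_4 := Ordinal (isT : 1 < 4).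
  pose o2 : 'I_4 := Ordinal (isT : 2 < 4). pose o3 : 'I_4 := Ordinal (isT : 3 < 4).
  exists (g o0), (g o1), (g o2), (g o3); rewrite /occ !nth_F size_F ltn_ord.
  have := K o0 o1; have := K o1 o2; have := K o2 o3; have := K o1 o3; have := K o3 o0; have := K o0 o2.
  rewrite /=. lia.
case=> i [j [k [l H]]].
have /and4P[Hi Hj Hk Hl] : [&& i < n.*2, j < n.*2, k < n.*2 & l < n.*2] by move: H; rewrite /occ size_F; lia.
pose I := Ordinal Hi; pose J := Ordinal Hj; pose K := Ordinal Hk; pose L := Ordinal Hl.
apply/existsP; exists [ffun a : 'I_4 => nth I [:: I; J; K; L] a].
move: H; rewrite /occ -[i]/(val I) -[j]/(val J) -[k]/(val K) -[l]/(val L) !nth_F => H.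
simpl in H; apply/forallP => a; apply/forallP => b; rewrite !ffunE.
case: a => [[|[|[|[|a]]]] Ha] //; case: b => [[|[|[|[|b]]]] Hb] //=; try (apply/andP; split); try apply/eqP; lia.
Qed.

Theorem theorem3p1 (n : nat) :
  #|[set s : 'S_(n.*2) | dumont2 s & avoids_pattern s [:: 3; 1; 4; 2]]|
  = 'C(n.*2, n) %/ n.+1.
Proof.
rewrite -catalanB -count_goods cardE -(size_map (@F n)).
apply: perm_size; apply: uniq_perm.
- rewrite map_inj_uniq ?enum_uniq //; exact: F_inj.
- by rewrite filter_uniq ?permutations_uniq.
- move=> x; apply/mapP/idP.
  + case=> s; rewrite mem_enum inE => /andP[D Av] ->.
    by rewrite mem_goods size_F eqxx /good isperm_F -dum_F D -avoid_F Av.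
  + rewrite mem_goods => /andP[/eqP Sx /and3P[Px Dx Ax]].
    have [t Et] := F_surj Sx Px.
    by exists t => //; rewrite mem_enum inE dum_F Et Dx avoid_F Et Ax.
Qed.
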